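(* Fix $\sigma\in(0,\tfrac12)$. There exists $\lambda^{*}>0$ such that, denoting by $\overline{\Gamma_0(\lambda)}$ the closure of $\Gamma_0(\lambda)$ in $\mathbb{R}^2$: - for $\lambda\in(0,\lambda^{*})$, $\overline{\Gamma_0(\lambda)}\cap(\{0\}\times(-\infty,0))=\emptyset$; - for $\lambda=\lambda^{*}$, $\overline{\Gamma_0(\lambda)}\cap(\{0\}\times(-\infty,0))=\{(0,-\xi^{*})\}$ for some $\xi^{*}\in(0,+\infty)$; - for $\lambda>\lambda^{*}$, $\overline{\Gamma_0(\lambda)}\cap(\{0\}\times(-\infty,0))=\{(0,-\xi_0),(0,-\xi_1)\}$ for some $0<\xi_0<\xi_1$.
   Context: Let $g(s)=s^2(1-s)$ and $G(u)=u^3/3-u^4/4$ on $[0,1]$. For $\lambda>0$ and $s\in(0,1)$, let $(u_s,v_s)$ be the unique solution, on its maximal interval of existence, of $u'=v$, $v'=-\lambda g(u)$, $u(0)=s$, $v(0)=0$. Let $T_0(s)$ be the time taken by $(u_s,v_s)$ to go from $(s,0)$ to the half-line $\{0\}\times(-\infty,0)$ along the level line $v^2+2\lambda G(u)=2\lambda G(s)$, let $\mathcal{I}^0_\lambda=\{s\in(0,1):T_0(s)>\sigma\}$, and let $\Gamma_0(\lambda)=\{(u_s(\sigma),v_s(\sigma)): s\in\mathcal{I}^0_\lambda\}$. *)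

(* Defs.v *)
From Stdlib Require Import Reals.
From Coquelicot Require Import Coquelicot.
Open Scope R_scope.

Definition g (s : R) : R := s ^ 2 * (1 - s).
Definition G (u : R) : R := u ^ 3 / 3 - u ^ 4 / 4.

(* (u,v) solves u' = v, v' = -lam g(u), u(0)=s, v(0)=0 on the time interval [0,T]
   (two-sided derivatives at every point of [0,T]).  Solutions are unique
   (the vector field is polynomial, hence locally Lipschitz), so any such pair
   coincides on [0,T] with the maximal solution (u_s, v_s). *)
Definition is_sol (lam s T : R) (u v : R -> R) : Prop :=
  u 0 = s /\ v 0 = 0 /\
  forall t, 0 <= t <= T ->
    is_derive u t (v t) /\ is_derive v t (- lam * g (u t)).

Definition on_halfline_at (lam s t : R) : Prop :=
  exists u v, is_sol lam s t u v /\ u t = 0 /\ v t < 0.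

Definition T0 (lam s : R) : R :=
  real (Glb_Rbar (fun t => 0 <= t /\ on_halfline_at lam s t)).

Definition I0 (lam sigma : R) (s : R) : Prop :=
  0 < s < 1 /\ T0 lam s > sigma.

Definition Gamma0 (lam sigma : R) (p : R * R) : Prop :=
  exists s, I0 lam sigma s /\
    exists u v, is_sol lam s sigma u v /\ p = (u sigma, v sigma).

Definition closure2 (A : R * R -> Prop) (p : R * R) : Prop :=
  forall eps, 0 < eps -> exists q, A q /\
    sqrt ((fst p - fst q) ^ 2 + (snd p - snd q) ^ 2) < eps.

(* Main.v *)
Require Import Defs.
From Stdlib Require Import Reals Lra Psatz ClassicalEpsilon.
From Coquelicot Require Import Coquelicot.
Open Scope R_scope.

Definition A (w : R) := 1 - w^2 + w^4/3.
Definition B (w : R) := 1 - 3/2*w^2 + w^4 - w^6/4.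
Definition P (s w : R) := A w - s * B w.
Definition dP (s w : R) := (-2*w + 4/3*w^3) - s * (-3*w + 4*w^3 - 3/2*w^5).
Lemma I1 s w : G s - G (s*(1-w^2)) = s^3 * w^2 * P s w.
Proof. unfold G, P, A, B. field. Qed.
Lemma I2 s w : P s w + w * dP s w / 2 = (1-w^2)^2 * (1 - s + s*w^2).
Proof. unfold P, dP, A, B. field. Qed.
Lemma Gmono a b : a < b -> b <= 1 -> G a < G b.
Proof. intros. unfold G.
assert (H1: b^3/3 - b^4/4 - (a^3/3 - a^4/4) = (b-a)/12 * (4*(a^2+a*b+b^2) - 3*(a+b)*(a^2+b^2))) by field.
destruct (Rle_dec 0 a).
- assert (0 < 4*(a^2+a*b+b^2) - 3*(a+b)*(a^2+b^2)).
  { assert (a^3 <= a^2) by nra. assert (b^3 <= b^2) by nra. assert (a*b^2 <= a*b) by nra.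
    assert (a^2*b <= a*b) by nra. nra. }
  nra.
- destruct (Rle_dec b 0).
  + assert (0 < 4*(a^2+a*b+b^2) - 3*(a+b)*(a^2+b^2)).
    { assert (0 < a^2+a*b+b^2) by nra. assert (0 <= -(a+b)*(a^2+b^2)) by nra. nra. }
    nra.
  + assert (0 < b^3) by (apply pow_lt; lra). assert (0 < b^3/3 - b^4/4) by (replace (b^4) with (b*b^3) by ring; nra).
    assert (a^3 < 0) by (replace (a^3) with (a*(a*a)) by ring; assert (0<a*a) by nra; nra). assert (0 <= a^4) by (replace (a^4) with ((a*a)*(a*a)) by ring; nra). lra.
Qed.
Lemma Ppos s w : 0 < s < 1 -> 0 < P s w.
Proof. intros. destruct (Req_dec w 0) as [->|Hw].
- unfold P, A, B. simpl. lra.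
- assert (0 < w^2) by (simpl; rewrite Rmult_1_r; apply Rsqr_pos_lt; auto).
  assert (G (s*(1-w^2)) < G s) by (apply Gmono; nra).
  pose proof (I1 s w). assert (0 < s^3) by (apply pow_lt; lra).
  assert (0 < s^3 * w^2) by nra.
  destruct (Rle_dec (P s w) 0); [|lra].
  nra.
Qed.
Lemma powz w : w^4 = (w^2)*(w^2) /\ w^6 = (w^2)*(w^2)*(w^2).
Proof. split; ring. Qed.
Lemma Bbounds w : w^2 <= 1 -> 1/4 <= B w <= 1.
Proof. intros. unfold B. destruct (powz w) as [-> ->].
 assert (0 <= w^2) by (apply pow2_ge_0). set (z := w^2) in *. split; nra. Qed.
Lemma Abounds w : w^2 <= 1 -> A w <= 1 /\ w^2/12 <= A w - B w <= w^2/2.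
Proof. intros. unfold A, B. destruct (powz w) as [-> ->].
 assert (0 <= w^2) by (apply pow2_ge_0). set (z := w^2) in *. split; [|split].
 - nra.
 - assert (0 <= z*((3*z-5)*(z-1))) by (apply Rmult_le_pos; nra). nra.
 - assert (0 <= z*z*(2/3 - z/4)) by (apply Rmult_le_pos; nra). nra. Qed.
Lemma Pbounds s w : 0 < s < 1 -> w^2 <= 1 ->
  P s w <= 1 /\ (1-s)/4 <= P s w /\ w^2/12 + (1-s)/4 <= P s w /\ P s w <= w^2/2 + (1-s).
Proof. intros. pose proof (Bbounds w H0). pose proof (Abounds w H0). unfold P.
 replace (A w - s * B w) with ((A w - B w) + (1-s)*B w) by ring.
 assert (0 <= w^2) by (apply pow2_ge_0). repeat split; nra. Qed.

Lemma exd_cont (f : R -> R) x : ex_derive f x -> continuous f x.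
Proof. apply (@ex_derive_continuous R_AbsRing R_NormedModule). Qed.
Lemma exd_contpt (f : R -> R) x : ex_derive f x -> continuity_pt f x.
Proof. intros; apply continuity_pt_filterlim, exd_cont; auto. Qed.
Lemma der_contpt (f : R -> R) x l : is_derive f x l -> continuity_pt f x.
Proof. intros; apply exd_contpt; exists l; auto. Qed.
Lemma exRInt_cont (f : R -> R) a b : (forall z, Rmin a b <= z <= Rmax a b -> continuous f z) -> ex_RInt f a b.
Proof. apply (@ex_RInt_continuous R_CompleteNormedModule). Qed.
Definition kk lam s w := 2 / sqrt (2*lam*s*P s w).
Definition phi lam s x : R := RInt (kk lam s) 0 x.
Section S.
Variables lam s : R.
Hypothesis Hl : 0 < lam.
Hypothesis Hs : 0 < s < 1.
Lemma Q_pos w : 0 < 2*lam*s*P s w.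
Proof. pose proof (Ppos s w Hs). apply Rmult_lt_0_compat; [|auto]. nra. Qed.
Lemma kk_pos w : 0 < kk lam s w.
Proof. unfold kk. apply Rdiv_lt_0_compat; [lra|]. apply sqrt_lt_R0, Q_pos. Qed.
Lemma kk_cont w : continuous (kk lam s) w.
Proof. apply exd_cont. pose proof (Q_pos w). unfold kk, P, A, B in *.
 auto_derive. split; [lra|split;[|auto]]. apply Rgt_not_eq, sqrt_lt_R0. lra. Qed.
Lemma kk_int a b : ex_RInt (kk lam s) a b.
Proof. apply exRInt_cont; intros; apply kk_cont. Qed.
Lemma phi_deriv x : is_derive (phi lam s) x (kk lam s x).
Proof. apply (is_derive_RInt (kk lam s) (phi lam s) 0); [|apply kk_cont]. apply filter_forall. intros. apply (@RInt_correct R_CompleteNormedModule), kk_int. Qed.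
Lemma phi_cont x : continuity_pt (phi lam s) x.
Proof. eapply der_contpt, phi_deriv. Qed.
Lemma phi_incr x y : x < y -> phi lam s x < phi lam s y.
Proof. intros. destruct (MVT_gen (phi lam s) x y (kk lam s)) as [c [_ Hc]].
 - intros; apply phi_deriv.
 - intros; apply phi_cont.
 - pose proof (kk_pos c). nra. Qed.
Lemma phi0 : phi lam s 0 = 0.
Proof. unfold phi. rewrite RInt_point. reflexivity. Qed.

Lemma phi_range t : phi lam s (-1) <= t <= phi lam s 2 -> exists w, -1 <= w <= 2 /\ phi lam s w = t.
Proof. intros. destruct (IVT_gen (phi lam s) (-1) 2 t) as [w Hw].
 - intro; apply phi_cont.
 - pose proof (phi_incr (-1) 2 ltac:(lra)). rewrite Rmin_left, Rmax_right; lra.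
 - exists w. rewrite Rmin_left, Rmax_right in Hw; lra. Qed.
End S.
Definition psi lam s t := epsilon (inhabits 0) (fun w => -1 <= w <= 2 /\ phi lam s w = t).
Definition U lam s t := s * (1 - psi lam s t ^ 2).
Definition V lam s t := - s * psi lam s t * sqrt (2*lam*s*P s (psi lam s t)).
Section S2.
Variables lam s : R.
Hypothesis Hl : 0 < lam.
Hypothesis Hs : 0 < s < 1.
Lemma psi_spec t : phi lam s (-1) <= t <= phi lam s 2 -> -1 <= psi lam s t <= 2 /\ phi lam s (psi lam s t) = t.
Proof. intros. unfold psi. apply epsilon_spec. apply phi_range; auto. Qed.
Lemma phi_inj x y : phi lam s x = phi lam s y -> x = y.
Proof. intros. destruct (Rtotal_order x y) as [H1|[H1|H1]]; auto;
 apply (phi_incr lam s Hl Hs) in H1; lra. Qed.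
Lemma psi_phi w : -1 <= w <= 2 -> psi lam s (phi lam s w) = w.
Proof. intros. apply phi_inj. apply psi_spec.
 split; [destruct (Req_dec w (-1)) as [->|]; [lra|]|destruct (Req_dec w 2) as [->|]; [lra|]];
 apply Rlt_le, phi_incr; auto; lra. Qed.
Lemma psi_cont t : phi lam s (-1) < t < phi lam s 2 -> continuity_pt (psi lam s) t.
Proof. intros. apply (Ranalysis5.continuity_pt_recip_interv (phi lam s) (psi lam s) (-1) 2); auto; try lra.
 - intros. apply phi_incr; auto.
 - intros. unfold comp, id. apply psi_spec; lra.
 - intros. apply psi_spec; lra.
 - intros. apply phi_cont; auto. Qed.
Lemma psi_deriv t : phi lam s (-1) < t < phi lam s 2 ->
  is_derive (psi lam s) t (sqrt (2*lam*s*P s (psi lam s t)) / 2).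
Proof. intros Ht.
 assert (Prf : forall a, psi lam s (phi lam s (-1)) <= a <= psi lam s (phi lam s 2) -> derivable_pt (phi lam s) a).
 { intros. apply ex_derive_Reals_0. eexists; apply phi_deriv; auto. }
 assert (Hi : psi lam s (phi lam s (-1)) <= psi lam s t <= psi lam s (phi lam s 2)).
 { rewrite !psi_phi by lra. apply psi_spec; lra. }
 pose proof (Ranalysis5.derivable_pt_lim_recip_interv (phi lam s) (psi lam s) _ _ t Prf (psi_cont t Ht)
   (phi_incr lam s Hl Hs (-1) 2 ltac:(lra)) Ht Hi) as H.
 assert (E : derive_pt (phi lam s) (psi lam s t) (Prf (psi lam s t) Hi) = kk lam s (psi lam s t)).
 { apply derive_pt_eq_0. apply is_derive_Reals, phi_deriv; auto. }
 rewrite E in H. apply is_derive_Reals.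
 replace (sqrt (2*lam*s*P s (psi lam s t)) / 2) with (1 / kk lam s (psi lam s t)).
 2:{ unfold kk. pose proof (Q_pos lam s Hl Hs (psi lam s t)). pose proof (sqrt_lt_R0 _ H0). field. lra. }
 apply H.
 - intros. unfold comp, id. apply psi_spec; lra.
 - pose proof (kk_pos lam s Hl Hs (psi lam s t)). lra.
Qed.
End S2.

Section S3.
Variables lam s : R.
Hypothesis Hl : 0 < lam.
Hypothesis Hs : 0 < s < 1.
Lemma dF_U w : is_derive (fun w => s*(1-w^2)) w (-2*s*w).
Proof. auto_derive; auto. ring. Qed.
Lemma gen_sq (Qf : R -> R) dQ w : is_derive Qf w dQ -> 0 < Qf w ->
  is_derive (fun w => - s * w * sqrt (Qf w)) w (- s * sqrt (Qf w) - s * w * dQ / (2 * sqrt (Qf w))).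
Proof. intros. pose proof (is_derive_sqrt Qf w dQ H H0).
 pose proof (@is_derive_mult R_AbsRing (fun w => - s * w) (fun w => sqrt (Qf w)) w (-s) _ ltac:(auto_derive; auto; ring) H1 ltac:(intros; apply Rmult_comm)).
 simpl in H2. unfold plus, mult in H2; simpl in H2.
 match goal with |- is_derive _ _ ?l => replace l with (- s * sqrt (Qf w) + - s * w * (dQ / (2 * sqrt (Qf w)))) end. exact H2.
 field. apply Rgt_not_eq, sqrt_lt_R0; lra. Qed.
Lemma dP_deriv w : is_derive (fun w => 2*lam*s*P s w) w (2*lam*s*dP s w).
Proof. unfold P, A, B, dP. auto_derive; auto. field. Qed.
Lemma dF_V w : is_derive (fun w => - s * w * sqrt (2*lam*s*P s w)) w
   (- s * sqrt (2*lam*s*P s w) - s * w * (2*lam*s*dP s w) / (2 * sqrt (2*lam*s*P s w))).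
Proof. apply (gen_sq (fun w => 2*lam*s*P s w)). apply dP_deriv. apply Q_pos; auto. Qed.
Lemma U_deriv t : phi lam s (-1) < t < phi lam s 2 -> is_derive (U lam s) t (V lam s t).
Proof. intros. pose proof (is_derive_comp (fun w => s*(1-w^2)) (psi lam s) t _ _ (dF_U (psi lam s t)) (psi_deriv lam s Hl Hs t H)) as D.
 unfold U, V. replace (- s * psi lam s t * sqrt (2 * lam * s * P s (psi lam s t))) with
  (scal (sqrt (2 * lam * s * P s (psi lam s t)) / 2) (-2 * s * psi lam s t)). exact D.
 unfold scal; simpl; unfold mult; simpl. field. Qed.
Lemma V_deriv t : phi lam s (-1) < t < phi lam s 2 -> is_derive (V lam s) t (- lam * g (U lam s t)).
Proof. intros. pose proof (is_derive_comp _ (psi lam s) t _ _ (dF_V (psi lam s t)) (psi_deriv lam s Hl Hs t H)) as D.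
 unfold V. match goal with |- is_derive ?f _ ?l => replace l with (scal (sqrt (2 * lam * s * P s (psi lam s t)) / 2)
   (- s * sqrt (2*lam*s*P s (psi lam s t)) - s * (psi lam s t) * (2*lam*s*dP s (psi lam s t)) / (2 * sqrt (2*lam*s*P s (psi lam s t))))) end.
 exact D.
 unfold scal; simpl; unfold mult; simpl.
 set (w := psi lam s t). pose proof (Q_pos lam s Hl Hs w). pose proof (sqrt_lt_R0 _ H0).
 pose proof (sqrt_sqrt _ (Rlt_le _ _ H0)).
 set (r := sqrt (2 * lam * s * P s w)) in *.
 unfold U. fold w. pose proof (I2 s w). unfold g.
 replace (- lam * ((s * (1 - w ^ 2)) ^ 2 * (1 - s * (1 - w ^ 2)))) with (- lam * s^2 * ((1 - w ^ 2) ^ 2 * (1 - s + s * w ^ 2))) by ring.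
 rewrite <- H3. field_simplify; [|lra]. replace (r^2) with (r*r) by ring. rewrite H2. field. Qed.
End S3.


Lemma deriv_pos_loc (f : R -> R) x l : is_derive f x l -> 0 < l ->
  exists d, 0 < d /\ forall h, 0 < h < d -> f (x - h) < f x /\ f x < f (x + h).
Proof. intros H Hl. apply is_derive_Reals in H.
 destruct (H (l/2) ltac:(lra)) as [d Hd]. exists d. split; [apply cond_pos|].
 intros h Hh. split.
 - specialize (Hd (-h) ltac:(lra) ltac:(rewrite Rabs_left; lra)).
   replace (x - h) with (x + - h) by ring.
   apply Rabs_def2 in Hd. destruct Hd as [H1 H2].
   set (q := (f (x + - h) - f x) / - h) in *.
   assert (f (x + -h) - f x = q * (-h)) by (unfold q; field; lra). nra.
 - specialize (Hd h ltac:(lra) ltac:(rewrite Rabs_right; lra)).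
   apply Rabs_def2 in Hd. destruct Hd as [H1 H2].
   set (q := (f (x + h) - f x) / h) in *.
   assert (f (x + h) - f x = q * h) by (unfold q; field; lra). nra.
Qed.

Lemma deriv_neg_loc (f : R -> R) x l : is_derive f x l -> l < 0 ->
  exists d, 0 < d /\ forall h, 0 < h < d -> f (x - h) > f x /\ f x > f (x + h).
Proof. intros H Hl. apply is_derive_opp in H.
 destruct (deriv_pos_loc (fun y => opp (f y)) x (opp l) H) as [d [Hd H']].
 unfold opp; simpl; lra. exists d; split; auto. intros h Hh. specialize (H' h Hh).
 unfold opp in H'; simpl in H'. lra. Qed.

Lemma eq_is_derive (f : R -> R) x l l' : is_derive f x l -> l = l' -> is_derive f x l'.
Proof. intros; subst; auto. Qed.

Lemma G_deriv x : is_derive G x (g x).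
Proof. unfold G, g. auto_derive; auto. field. Qed.

Section Sol.
Variables lam s T : R.
Variables u v : R -> R.
Hypothesis Hl : 0 < lam.
Hypothesis Hs : 0 < s < 1.
Hypothesis Hsol : is_sol lam s T u v.

Lemma du t : 0 <= t <= T -> is_derive u t (v t).
Proof. intros; apply Hsol; auto. Qed.
Lemma dv t : 0 <= t <= T -> is_derive v t (- lam * g (u t)).
Proof. intros; apply Hsol; auto. Qed.
Lemma u0 : u 0 = s. Proof. apply Hsol. Qed.
Lemma v0 : v 0 = 0. Proof. apply Hsol. Qed.

Lemma energy t : 0 <= t <= T -> v t ^ 2 = 2 * lam * (G s - G (u t)).
Proof. intros Ht.
 set (E := fun t => v t ^ 2 + 2 * lam * G (u t)).
 assert (DE : forall x, 0 <= x <= T -> is_derive E x 0).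
 { intros x Hx. unfold E.
   pose proof (is_derive_comp G u x _ _ (G_deriv (u x)) (du x Hx)) as D1.
   pose proof (is_derive_pow v 2 x _ (dv x Hx)) as D2.
   pose proof (is_derive_plus _ _ x _ _ D2 (is_derive_scal _ x (2*lam) _ D1)) as D3.
   eapply eq_is_derive. exact D3. simpl. unfold scal, plus, mult; simpl. unfold mult; simpl. unfold g. ring. }
 destruct (Req_dec t 0) as [->|Ht0].
 - rewrite u0, v0. ring.
 - destruct (MVT_gen E 0 t (fun _ => 0)) as [c [Hc Hc']].
   + intros x Hx. rewrite Rmin_left, Rmax_right in Hx by lra. apply DE; lra.
   + intros x Hx. rewrite Rmin_left, Rmax_right in Hx by lra. eapply der_contpt, DE; lra.
   + unfold E in Hc'. rewrite u0, v0 in Hc'. lra.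
Qed.

Lemma ucont t : 0 <= t <= T -> continuity_pt u t.
Proof. intros; eapply der_contpt, du; eauto. Qed.
Lemma vcont t : 0 <= t <= T -> continuity_pt v t.
Proof. intros; eapply der_contpt, dv; eauto. Qed.

Lemma u_lt1 t : 0 <= t <= T -> u t < 1.
Proof. intros Ht. destruct (Rlt_le_dec (u t) 1) as [|Hu]; auto. exfalso.
 assert (exists z, 0 <= z <= T /\ u z = 1) as [z [Hz Hz1]].
 { destruct (Req_dec (u t) 1). exists t; auto.
   destruct (Ranalysis5.IVT_interv (fun x => u x - 1) 0 t) as [z [Hz Hz']].
   - intros a Ha. apply continuity_pt_minus; [apply ucont; lra|apply continuity_pt_const; intros ? ?; auto].
   - destruct (Req_dec t 0) as [->|]; [rewrite u0 in Hu; lra|lra].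
   - simpl. rewrite u0. lra.
   - simpl. lra.
   - exists z. split; [lra|simpl in Hz'; lra]. }
 pose proof (energy z Hz). rewrite Hz1 in H. assert (G s < G 1) by (apply Gmono; lra).
 assert (0 <= v z ^ 2) by (apply pow2_ge_0). nra. Qed.

Lemma u_le_s t : 0 <= t <= T -> u t <= s.
Proof. intros Ht. destruct (Rle_dec (u t) s) as [|Hu]; auto. exfalso.
 pose proof (energy t Ht). pose proof (u_lt1 t Ht). assert (G s < G (u t)) by (apply Gmono; lra).
 assert (0 <= v t ^ 2) by (apply pow2_ge_0). nra. Qed.

Lemma v_zero t : 0 <= t <= T -> v t = 0 -> u t = s.
Proof. intros Ht Hv. pose proof (energy t Ht). rewrite Hv in H. pose proof (u_le_s t Ht).
 destruct (Req_dec (u t) s); auto. assert (G (u t) < G s) by (apply Gmono; lra). nra. Qed.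

Lemma v_le0 t : 0 <= t <= T -> v t <= 0.
Proof. intros Ht. destruct (Rle_dec (v t) 0) as [|Hv]; auto. exfalso.
 assert (Ht0 : t <> 0) by (intro; subst; rewrite v0 in Hv; lra).
 assert (Hut : u t < s).
 { pose proof (u_le_s t Ht). destruct (Req_dec (u t) s); [|lra].
   pose proof (energy t Ht). rewrite H0 in H1. assert (0 < v t ^ 2) by (apply pow_lt; lra). lra. }
 destruct (continuity_ab_min u 0 t ltac:(lra)) as [c [Hc Hcb]].
 { intros; apply ucont; lra. }
 assert (Huc : u c < s) by (specialize (Hc t ltac:(lra)); lra).
 assert (c <> 0) by (intro; subst; rewrite u0 in Huc; lra).
 destruct (Req_dec c t) as [->|Hct].
 - destruct (deriv_pos_loc u t (v t) (du t Ht) ltac:(lra)) as [d [Hd Hd']].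
   specialize (Hd' (Rmin (d/2) (t/2)) ltac:(split; [apply Rmin_glb_lt; lra|]; eapply Rle_lt_trans; [apply Rmin_l|lra])).
   assert (0 <= t - Rmin (d/2) (t/2) <= t) by (split; [assert (Rmin (d/2) (t/2) <= t/2) by apply Rmin_r; lra|assert (0 < Rmin (d/2) (t/2)) by (apply Rmin_glb_lt; lra); lra]).
   specialize (Hc _ H0). lra.
 - assert (Hc0 : 0 < c < t) by lra.
   assert (v c = 0).
   { destruct (Rtotal_order (v c) 0) as [Hn|[He|Hp]]; auto; exfalso.
     - destruct (deriv_neg_loc u c (v c) (du c ltac:(lra)) Hn) as [d [Hd Hd']].
       set (h := Rmin (d/2) ((t - c)/2)).
       assert (0 < h) by (apply Rmin_glb_lt; lra). assert (h <= (t-c)/2) by apply Rmin_r.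
       assert (h < d) by (eapply Rle_lt_trans; [apply Rmin_l|lra]).
       specialize (Hd' h ltac:(lra)). specialize (Hc (c + h) ltac:(lra)). lra.
     - destruct (deriv_pos_loc u c (v c) (du c ltac:(lra)) Hp) as [d [Hd Hd']].
       set (h := Rmin (d/2) (c/2)).
       assert (0 < h) by (apply Rmin_glb_lt; lra). assert (h <= c/2) by apply Rmin_r.
       assert (h < d) by (eapply Rle_lt_trans; [apply Rmin_l|lra]).
       specialize (Hd' h ltac:(lra)). specialize (Hc (c - h) ltac:(lra)). lra. }
   pose proof (v_zero c ltac:(lra) H0). lra.
Qed.

Lemma u_decr a b' : 0 <= a -> a <= b' -> b' <= T -> u b' <= u a.
Proof. intros. destruct (Req_dec a b') as [->|]; [lra|].
 destruct (MVT_gen u a b' v) as [c [Hc Hc']].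
 - intros x Hx. rewrite Rmin_left, Rmax_right in Hx by lra. apply du; lra.
 - intros x Hx. rewrite Rmin_left, Rmax_right in Hx by lra. apply ucont; lra.
 - rewrite Rmin_left, Rmax_right in Hc by lra. pose proof (v_le0 c ltac:(lra)). nra. Qed.

Lemma v_neg t : 0 < t <= T -> v t < 0.
Proof. intros Ht. destruct (Rlt_le_dec (v t) 0) as [|Hv]; auto. exfalso.
 assert (v t = 0) by (pose proof (v_le0 t ltac:(lra)); lra).
 pose proof (v_zero t ltac:(lra) H).
 assert (Hg : 0 < g s) by (unfold g; pose proof (pow_lt s 2 ltac:(lra)); nra).
 destruct (deriv_neg_loc v 0 _ (dv 0 ltac:(lra)) ltac:(rewrite u0; nra)) as [d [Hd Hd']].
 set (h := Rmin (d/2) (t/2)).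
 assert (0 < h) by (apply Rmin_glb_lt; lra). assert (h <= t/2) by apply Rmin_r.
 assert (h < d) by (eapply Rle_lt_trans; [apply Rmin_l|lra]).
 destruct (MVT_cor2 u v 0 h ltac:(lra)) as [c [Hc1 Hc2]].
 { intros c Hc. apply is_derive_Reals, du; lra. }
 assert (v c < 0).
 { specialize (Hd' c ltac:(lra)). rewrite v0 in Hd'. replace (0 + c) with c in Hd' by ring. lra. }
 rewrite u0 in Hc1. pose proof (u_decr h t ltac:(lra) ltac:(lra) ltac:(lra)). nra.
Qed.

Definition W t := sqrt ((s - u t) / s).

Lemma u_lt_s t : 0 < t <= T -> u t < s.
Proof. intros. pose proof (v_neg t H) as Hv. pose proof (energy t ltac:(lra)) as He. pose proof (u_le_s t ltac:(lra)).
 destruct (Req_dec (u t) s) as [E|]; [|lra]. rewrite E in He.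
 assert (0 < v t * v t) by nra. simpl in He. lra. Qed.

Lemma W_nonneg t : 0 <= W t. Proof. apply sqrt_pos. Qed.
Lemma W_sq t : 0 <= t <= T -> W t ^ 2 = (s - u t) / s.
Proof. intros. unfold W. simpl. rewrite Rmult_1_r. apply sqrt_sqrt.
 pose proof (u_le_s t H). apply Rdiv_le_0_compat; lra. Qed.
Lemma u_W t : 0 <= t <= T -> u t = s * (1 - W t ^ 2).
Proof. intros. rewrite W_sq by auto. field. lra. Qed.
Lemma W_pos t : 0 < t <= T -> 0 < W t.
Proof. intros. unfold W. apply sqrt_lt_R0. pose proof (u_lt_s t H). apply Rdiv_lt_0_compat; lra. Qed.
Lemma v_W t : 0 < t <= T -> - v t = s * W t * sqrt (2*lam*s*P s (W t)).
Proof. intros. pose proof (energy t ltac:(lra)) as He. rewrite (u_W t) in He by lra.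
 pose proof (I1 s (W t)) as I. rewrite I in He.
 pose proof (v_neg t H). pose proof (W_pos t H). pose proof (Q_pos lam s Hl Hs (W t)).
 pose proof (sqrt_lt_R0 _ H2). pose proof (sqrt_sqrt _ (Rlt_le _ _ H2)).
 set (r := sqrt (2 * lam * s * P s (W t))) in *.
 assert ((- v t)^2 = (s * W t * r)^2).
 { replace ((s * W t * r)^2) with (s^2 * W t^2 * (r*r)) by ring. rewrite H4. rewrite <- (Rsqr_pow2 (- v t)), <- Rsqr_neg, Rsqr_pow2, He. ring. }
 assert (0 < s * W t * r) by (apply Rmult_lt_0_compat; [apply Rmult_lt_0_compat|]; lra).
 apply Rsqr_inj; try lra. rewrite !Rsqr_pow2. auto. Qed.

Lemma phiW t : 0 <= t <= T -> phi lam s (W t) = t.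
Proof. intros Ht.
 set (h := fun x => phi lam s (W x) - x).
 assert (Wc : forall x, 0 <= x <= T -> continuity_pt W x).
 { intros x Hx. unfold W. apply (continuity_pt_comp (fun x => (s - u x)/s) sqrt).
   - apply continuity_pt_mult; [apply continuity_pt_minus; [apply continuity_pt_const; intros ? ?; auto|apply ucont; auto]|apply continuity_pt_const; intros ? ?; auto].
   - apply continuity_pt_sqrt. pose proof (u_le_s x Hx). apply Rdiv_le_0_compat; lra. }
 assert (Dh : forall x, 0 < x < T -> is_derive h x 0).
 { intros x Hx. unfold h.
   assert (D1 : is_derive (fun x => (s - u x)/s) x (- v x / s)).
   { pose proof (du x ltac:(lra)) as D. auto_derive. eexists; eauto.
     replace (Derive (fun x0 : R => u x0) x) with (v x) by (symmetry; apply is_derive_unique; auto). field. lra. }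
   assert (Hp : 0 < (s - u x)/s) by (pose proof (u_lt_s x ltac:(lra)); apply Rdiv_lt_0_compat; lra).
   pose proof (is_derive_sqrt _ x _ D1 Hp) as D2.
   pose proof (is_derive_comp (phi lam s) W x _ _ (phi_deriv lam s Hl Hs (W x)) D2) as D3.
   pose proof (is_derive_minus _ _ x _ _ D3 (is_derive_id x)) as D4.
   eapply eq_is_derive. exact D4. simpl.
   unfold scal, minus, plus, opp, mult; simpl. unfold mult, plus, opp; simpl.
   pose proof (v_W x ltac:(lra)) as HvW. pose proof (W_pos x ltac:(lra)).
   fold (W x). unfold kk. pose proof (Q_pos lam s Hl Hs (W x)). pose proof (sqrt_lt_R0 _ H0).
   set (r := sqrt (2 * lam * s * P s (W x))) in *.
   replace (- v x) with (s * W x * r) by lra. change (@one R_AbsRing) with 1. field. lra. }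
 destruct (Req_dec t 0) as [->|Ht0].
 - unfold W. rewrite u0, Rminus_diag, Rdiv_0_l, sqrt_0. apply phi0; auto.
 - destruct (MVT_gen h 0 t (fun _ => 0)) as [c [_ Hc]].
   + intros x Hx. rewrite Rmin_left, Rmax_right in Hx by lra. apply Dh. lra.
   + intros x Hx. rewrite Rmin_left, Rmax_right in Hx by lra. unfold h.
     apply continuity_pt_minus; [|apply continuity_pt_id].
     apply (continuity_pt_comp W (phi lam s)); [apply Wc; lra|apply phi_cont; auto].
   + unfold h in Hc. unfold W in Hc at 2. rewrite u0, Rminus_diag, Rdiv_0_l, sqrt_0, phi0 in Hc by auto. lra.
Qed.

Lemma hit_time t : 0 <= t <= T -> u t = 0 -> t = phi lam s 1.
Proof. intros. rewrite <- (phiW t H). unfold W. rewrite H0. replace ((s-0)/s) with 1 by (field; lra).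
 rewrite sqrt_1. auto. Qed.

Lemma W_lt1 t : 0 <= t <= T -> t < phi lam s 1 -> W t < 1.
Proof. intros. destruct (Rlt_le_dec (W t) 1); auto. rewrite <- (phiW t H) in H0.
 destruct (Req_dec (W t) 1) as [E|]. rewrite E in H0; lra.
 assert (phi lam s 1 < phi lam s (W t)) by (apply phi_incr; auto; lra). lra. Qed.

Lemma u_pos t : 0 <= t <= T -> t < phi lam s 1 -> 0 < u t.
Proof. intros. pose proof (W_lt1 t H H0). pose proof (W_nonneg t). rewrite u_W by auto.
 apply Rmult_lt_0_compat; [lra|]. simpl. nra. Qed.

Lemma v_formula t : 0 <= t <= T -> v t = - sqrt (2 * lam * (G s - G (u t))).
Proof. intros. rewrite <- energy by auto. pose proof (v_le0 t H).
 rewrite <- Rsqr_pow2, sqrt_Rsqr_abs, Rabs_left1 by lra. ring. Qed.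

Lemma kk_lo c : 0 <= c <= 1 -> 2 / sqrt (2*lam*s) <= kk lam s c.
Proof. intros. unfold kk. pose proof (Pbounds s c Hs ltac:(simpl; nra)). pose proof (Q_pos lam s Hl Hs c).
 apply Rmult_le_compat_l; [lra|]. apply Rinv_le_contravar; [apply sqrt_lt_R0; auto|].
 apply sqrt_le_1_alt. assert (0 < 2*lam*s) by nra. nra. Qed.

Lemma kk_hi c : 1/2 <= c <= 1 -> kk lam s c <= 2 / sqrt (2*lam*s/48).
Proof. intros. unfold kk. pose proof (Pbounds s c Hs ltac:(simpl; nra)).
 assert (0 < 2*lam*s) by nra.
 apply Rmult_le_compat_l; [lra|]. apply Rinv_le_contravar; [apply sqrt_lt_R0; lra|].
 apply sqrt_le_1_alt. assert (1/48 <= P s c) by (simpl in H0; nra). nra. Qed.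

Lemma est_lo t : 0 <= t <= T -> t < phi lam s 1 -> u t / (s * sqrt (2*lam*s)) <= phi lam s 1 - t.
Proof. intros. pose proof (W_lt1 t H H0). pose proof (W_nonneg t).
 rewrite <- (phiW t H) at 2.
 destruct (MVT_gen (phi lam s) (W t) 1 (kk lam s)) as [c [Hc Hc']].
 - intros; apply phi_deriv; auto.
 - intros; apply phi_cont; auto.
 - rewrite Rmin_left, Rmax_right in Hc by lra. rewrite Hc'.
   pose proof (kk_lo c ltac:(lra)). rewrite u_W by auto.
   assert (0 < sqrt (2*lam*s)) by (apply sqrt_lt_R0; nra).
   apply Rle_trans with (2 / sqrt (2 * lam * s) * (1 - W t)); [|apply Rmult_le_compat_r; lra].
   unfold Rdiv. rewrite Rinv_mult. 
   replace (s * (1 - W t ^ 2) * (/ s * / sqrt (2 * lam * s))) with ((1 - W t ^ 2) * / sqrt (2 * lam * s)) by (field; lra).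
   assert (0 < / sqrt (2*lam*s)) by (apply Rinv_0_lt_compat; lra). assert (1 - W t ^2 <= 2*(1 - W t)) by (simpl; nra).
   replace (2 * / sqrt (2 * lam * s) * (1 - W t)) with ((2*(1 - W t)) * / sqrt (2 * lam * s)) by ring. apply Rmult_le_compat_r; lra. Qed.

Lemma est_hi t : 0 <= t <= T -> t < phi lam s 1 -> u t <= 3*s/4 ->
  phi lam s 1 - t <= 2 / sqrt (2*lam*s/48) * (u t / s).
Proof. intros. pose proof (W_lt1 t H H0). pose proof (W_nonneg t).
 assert (1/2 <= W t).
 { rewrite u_W in H1 by auto. destruct (Rle_dec (1/2) (W t)); auto. simpl in H1. assert (W t * W t < 1/4) by nra. assert (s * (1 - W t * (W t * 1)) > 3 * s / 4) by nra. lra. }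
 rewrite <- (phiW t H) at 1.
 destruct (MVT_gen (phi lam s) (W t) 1 (kk lam s)) as [c [Hc Hc']].
 - intros; apply phi_deriv; auto.
 - intros; apply phi_cont; auto.
 - rewrite Rmin_left, Rmax_right in Hc by lra. rewrite Hc'.
   pose proof (kk_hi c ltac:(lra)). pose proof (kk_pos lam s Hl Hs c). rewrite u_W by auto.
   replace (s * (1 - W t ^ 2) / s) with (1 - W t ^ 2) by (field; lra).
   apply Rle_trans with (2 / sqrt (2 * lam * s / 48) * (1 - W t)); [apply Rmult_le_compat_r; lra|].
   apply Rmult_le_compat_l; [lra|]. simpl. nra. Qed.
End Sol.


Section E.
Variables lam s : R.
Hypothesis Hl : 0 < lam.
Hypothesis Hs : 0 < s < 1.

Lemma psi0 : psi lam s 0 = 0.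
Proof. rewrite <- (phi0 lam s) at 1. apply psi_phi; auto; lra. Qed.
Lemma psi1 : psi lam s (phi lam s 1) = 1.
Proof. apply psi_phi; auto; lra. Qed.
Lemma phi1_pos : 0 < phi lam s 1.
Proof. rewrite <- (phi0 lam s). apply phi_incr; auto; lra. Qed.

Lemma UV_sol T : 0 <= T <= phi lam s 1 -> is_sol lam s T (U lam s) (V lam s).
Proof. intros HT. split; [|split].
 - unfold U. rewrite psi0. ring.
 - unfold V. rewrite psi0. ring.
 - intros t Ht. assert (phi lam s (-1) < t < phi lam s 2).
   { pose proof (phi_incr lam s Hl Hs (-1) 0 ltac:(lra)). pose proof (phi_incr lam s Hl Hs 1 2 ltac:(lra)).
     rewrite phi0 in H by auto. lra. }
   split; [apply U_deriv|apply V_deriv]; auto.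
Qed.

Lemma U_end : U lam s (phi lam s 1) = 0.
Proof. unfold U. rewrite psi1. ring. Qed.
Lemma V_end : V lam s (phi lam s 1) < 0.
Proof. unfold V. rewrite psi1. pose proof (Q_pos lam s Hl Hs 1). pose proof (sqrt_lt_R0 _ H).
 assert (0 < s * 1 * sqrt (2 * lam * s * P s 1)) by (apply Rmult_lt_0_compat; lra). lra. Qed.

Lemma T0_eq : T0 lam s = phi lam s 1.
Proof. unfold T0.
 assert (HS : forall t, (0 <= t /\ on_halfline_at lam s t) <-> t = phi lam s 1).
 { intros t; split.
   - intros [Ht [u [v [Hsol [Hu Hv]]]]]. eapply hit_time; eauto. lra.
   - intros ->. pose proof phi1_pos. split; [lra|]. exists (U lam s), (V lam s).
     split; [apply UV_sol; lra|]. split; [apply U_end|apply V_end]. }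
 rewrite (is_glb_Rbar_unique _ (phi lam s 1)); auto.
 split.
 - intros t Ht. apply HS in Ht. subst. simpl. lra.
 - intros b Hb. apply Hb. apply HS. auto.
Qed.

Definition ptprops (sigma : R) (p : R * R) :=
 0 < fst p /\ fst p < s /\ snd p = - sqrt (2 * lam * (G s - G (fst p))) /\
  fst p / (s * sqrt (2*lam*s)) <= phi lam s 1 - sigma /\
  (fst p <= 3*s/4 -> phi lam s 1 - sigma <= 2 / sqrt (2*lam*s/48) * (fst p / s)).

Lemma sol_ptprops sigma u v : 0 < sigma < phi lam s 1 -> is_sol lam s sigma u v -> ptprops sigma (u sigma, v sigma).
Proof. intros Hsig Hsol. unfold ptprops; simpl. split; [|split; [|split; [|split]]].
 - eapply u_pos; eauto; lra.
 - eapply u_lt_s; eauto; lra.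
 - eapply v_formula; eauto; lra.
 - eapply est_lo; eauto; lra.
 - eapply est_hi; eauto; lra.
Qed.
End E.

Lemma Gamma0_inv lam sigma p : 0 < lam -> 0 < sigma -> Gamma0 lam sigma p ->
  exists s, 0 < s < 1 /\ sigma < phi lam s 1 /\ ptprops lam s sigma p.
Proof. intros Hl Hsig [s [[Hs HT] [u [v [Hsol ->]]]]]. rewrite T0_eq in HT by auto.
 exists s. split; auto. split; auto. apply sol_ptprops with (v := v) (u := u); auto; lra. Qed.

Lemma Gamma0_mk lam sigma s : 0 < lam -> 0 < sigma -> 0 < s < 1 -> sigma < phi lam s 1 ->
  exists p, Gamma0 lam sigma p /\ ptprops lam s sigma p.
Proof. intros. exists (U lam s sigma, V lam s sigma). split.
 - exists s. split. split; auto. rewrite T0_eq; auto. exists (U lam s), (V lam s). split; auto.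
   apply UV_sol; auto; lra.
 - apply sol_ptprops; auto. apply UV_sol; auto; lra. Qed.


Definition T1 (s : R) : R := phi 1 s 1.

Lemma kk_scale lam s w : 0 < lam -> 0 < s < 1 -> kk lam s w = / sqrt lam * kk 1 s w.
Proof. intros. unfold kk. replace (2 * lam * s * P s w) with (lam * (2 * 1 * s * P s w)) by ring.
 rewrite sqrt_mult_alt by lra. pose proof (Q_pos 1 s ltac:(lra) H0 w). pose proof (sqrt_lt_R0 _ H1).
 pose proof (sqrt_lt_R0 _ H). field. lra. Qed.

Lemma phi1_T1 lam s : 0 < lam -> 0 < s < 1 -> phi lam s 1 = T1 s / sqrt lam.
Proof. intros. unfold T1, phi.
 rewrite (RInt_ext (kk lam s) (fun w => scal (/ sqrt lam) (kk 1 s w))).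
 - rewrite (@RInt_scal R_CompleteNormedModule). unfold scal; simpl; unfold mult; simpl. field.
   apply Rgt_not_eq, sqrt_lt_R0; auto. apply kk_int; auto; lra.
 - intros. rewrite kk_scale by auto. reflexivity.
Qed.

Lemma inv_sqrt_lip x y m : 0 < m -> m <= x -> m <= y ->
  Rabs (2 / sqrt x - 2 / sqrt y) <= 2 * Rabs (x - y) / (m * sqrt m).
Proof. intros.
 pose proof (sqrt_lt_R0 m H). assert (sqrt m <= sqrt x) by (apply sqrt_le_1_alt; lra).
 assert (sqrt m <= sqrt y) by (apply sqrt_le_1_alt; lra).
 pose proof (sqrt_sqrt x ltac:(lra)). pose proof (sqrt_sqrt y ltac:(lra)). pose proof (sqrt_sqrt m ltac:(lra)).
 set (p := sqrt x) in *. set (q := sqrt y) in *. set (r := sqrt m) in *.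
 clearbody p q r. subst x y m.
 replace (2 / p - 2 / q) with (2 * (q - p) / (p * q)) by (field; lra).
 replace (p * p - q * q) with ((p - q) * (p + q)) by ring.
 unfold Rdiv. rewrite !Rabs_mult. rewrite (Rabs_right 2) by lra.
 rewrite (Rabs_right (/ (p*q))) by (apply Rle_ge, Rlt_le, Rinv_0_lt_compat; nra).
 rewrite (Rabs_right (p+q)) by lra. rewrite Rabs_minus_sym.
 assert (0 <= Rabs (p - q)) by apply Rabs_pos.
 assert (r*r*r <= p*q*(p+q)) by (assert (r*r <= p*q) by nra; nra).
 assert (/ (p*q) <= (p+q) * / (r * r * r)).
 { apply (Rmult_le_reg_l (p*q)); [nra|]. rewrite Rinv_r by nra.
   apply (Rmult_le_reg_l (r*r*r)); [nra|]. field_simplify; nra. }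
 replace (/ (r * r * r)) with (/ (r * r * r)) in H6 by reflexivity.
 replace (r * r * r) with ((r*r)*r) in * by ring. nra.
Qed.

Lemma kk1_lip a b s s' w : 0 < a -> a <= s <= b -> a <= s' <= b -> b < 1 -> 0 <= w <= 1 ->
  Rabs (kk 1 s w - kk 1 s' w) <= 12 / ((a*(1-b)/2) * sqrt (a*(1-b)/2)) * Rabs (s - s').
Proof. intros. unfold kk.
 assert (Hw : w^2 <= 1) by (simpl; nra).
 pose proof (Pbounds s w ltac:(lra) Hw). pose proof (Pbounds s' w ltac:(lra) Hw).
 pose proof (Abounds w Hw). pose proof (Bbounds w Hw).
 assert (Hm : 0 < a*(1-b)/2) by nra.
 eapply Rle_trans. apply (inv_sqrt_lip _ _ (a*(1-b)/2)); auto.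
 - assert (a*(1-b) <= s * (1-s)) by nra. nra.
 - assert (a*(1-b) <= s' * (1-s')) by nra. nra.
 - replace (2 * 1 * s * P s w - 2 * 1 * s' * P s' w) with (2 * (s - s') * (A w - (s + s') * B w)) by (unfold P; ring).
   rewrite !Rabs_mult, (Rabs_right 2) by lra.
   assert (Rabs (A w - (s + s') * B w) <= 3).
   { apply Rabs_le. split; nra. }
   pose proof (sqrt_lt_R0 _ Hm).
   assert (0 <= Rabs (s - s')) by apply Rabs_pos.
   unfold Rdiv. assert (0 < / (a * (1 - b) * / 2 * sqrt (a * (1 - b) * / 2))).
   { apply Rinv_0_lt_compat. apply Rmult_lt_0_compat; lra. }
   set (K := / (a * (1 - b) * / 2 * sqrt (a * (1 - b) * / 2))) in *.
   assert (0 <= Rabs (A w - (s + s') * B w)) by apply Rabs_pos. assert (0 <= Rabs (s - s') * K) by (apply Rmult_le_pos; lra). nra.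
Qed.

Lemma T1_lip a b s s' : 0 < a -> a <= s <= b -> a <= s' <= b -> b < 1 ->
  Rabs (T1 s - T1 s') <= 12 / ((a*(1-b)/2) * sqrt (a*(1-b)/2)) * Rabs (s - s').
Proof. intros. unfold T1, phi.
 rewrite <- (RInt_minus (V := R_CompleteNormedModule)) by (apply kk_int; lra).
 replace (12 / (a * (1 - b) / 2 * sqrt (a * (1 - b) / 2)) * Rabs (s - s')) with
   ((1 - 0) * (12 / (a * (1 - b) / 2 * sqrt (a * (1 - b) / 2)) * Rabs (s - s'))) by ring.
 apply abs_RInt_le_const; [lra| |].
 - apply (ex_RInt_minus (V := R_NormedModule)); apply kk_int; lra.
 - intros t Ht. unfold minus, plus, opp; simpl. apply kk1_lip; auto.
Qed.

Lemma T1_cont s0 : 0 < s0 < 1 -> continuity_pt T1 s0.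
Proof. intros Hs0. intros e He.
 set (a := s0/2). set (b := (1+s0)/2).
 set (L := 12 / ((a*(1-b)/2) * sqrt (a*(1-b)/2))).
 assert (HL : 0 < L).
 { unfold L. apply Rdiv_lt_0_compat; [lra|]. assert (0 < a*(1-b)/2) by (unfold a, b; nra).
   pose proof (sqrt_lt_R0 _ H). nra. }
 exists (Rmin (Rmin (s0/2) ((1-s0)/2)) (e / L)). split.
 - apply Rmin_glb_lt; [apply Rmin_glb_lt; lra|apply Rdiv_lt_0_compat; lra].
 - intros s [[_ Hneq] Hd]. simpl in *. unfold R_dist in *.
   assert (Hd1 : Rabs (s - s0) < Rmin (s0/2) ((1-s0)/2)) by (eapply Rlt_le_trans; [apply Hd|apply Rmin_l]).
   assert (Rmin (s0/2) ((1-s0)/2) <= s0/2) by apply Rmin_l.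
   assert (Rmin (s0/2) ((1-s0)/2) <= (1-s0)/2) by apply Rmin_r.
   assert (Hd2 : Rabs (s - s0) < e/L) by (eapply Rlt_le_trans; [apply Hd|apply Rmin_r]).
   apply Rabs_def2 in Hd1.
   eapply Rle_lt_trans. apply (T1_lip a b); unfold a, b; lra.
   fold L. apply (Rmult_lt_compat_l L) in Hd2; auto. replace (L * (e/L)) with e in Hd2 by (field; lra). lra.
Qed.

Lemma tangent y x0 : 0 < y -> 0 < x0 -> 2 / sqrt x0 - (y - x0) / (x0 * sqrt x0) <= 2 / sqrt y.
Proof. intros. pose proof (sqrt_lt_R0 _ H). pose proof (sqrt_lt_R0 _ H0).
 pose proof (sqrt_sqrt y ltac:(lra)). pose proof (sqrt_sqrt x0 ltac:(lra)).
 set (p := sqrt y) in *. set (q := sqrt x0) in *. clearbody p q. subst y x0.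
 assert (0 <= (p - q)^2 * (p + 2*q)) by (apply Rmult_le_pos; [apply pow2_ge_0|lra]).
 apply (Rmult_le_reg_l (p * (q*q*q))). apply Rmult_lt_0_compat; [lra|]. apply Rmult_lt_0_compat; [|lra]. nra.
 replace (p * (q * q * q) * (2 / q - (p * p - q * q) / (q * q * q))) with (2*p*q*q - p*(p*p - q*q)) by (field; lra).
 replace (p * (q * q * q) * (2 / p)) with (2*q*q*q) by (field; lra). nra. Qed.

Lemma conv_in a b th : 0 < a < b -> b < 1 -> 0 < th < 1 ->
  0 < th*a + (1-th)*b < 1 /\ a < th*a + (1-th)*b < b.
Proof. intros. assert (0 < th*a) by nra. assert (0 < (1-th)*b) by nra.
 assert (th*a < th*b) by nra. assert ((1-th)*a < (1-th)*b) by nra. assert ((1-th)*b < 1-th) by nra. lra. Qed.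

Lemma kk_conv a b th w : 0 < a < b -> b < 1 -> 0 < th < 1 -> 0 <= w <= 1 ->
  kk 1 (th*a + (1-th)*b) w < th * kk 1 a w + (1-th) * kk 1 b w.
Proof. intros. unfold kk.
 set (m := th*a + (1-th)*b).
 assert (Hm : 0 < m < 1) by (unfold m; apply conv_in; auto).
 pose proof (Q_pos 1 a ltac:(lra) ltac:(lra) w). pose proof (Q_pos 1 b ltac:(lra) ltac:(lra) w).
 set (xa := 2*1*a*P a w) in *. set (xb := 2*1*b*P b w) in *.
 set (xl := th * xa + (1-th) * xb).
 assert (Hxl : 0 < xl) by (unfold xl; nra).
 pose proof (Bbounds w ltac:(simpl; nra)).
 assert (Hgap : 2 * 1 * m * P m w = xl + 2 * th * (1-th) * (a-b)^2 * B w) by (unfold xl, xa, xb, m, P; ring).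
 assert (0 < 2 * th * (1-th) * (a-b)^2 * B w).
 { apply Rmult_lt_0_compat; [|lra]. apply Rmult_lt_0_compat; [nra|]. replace ((a-b)^2) with ((b-a)^2) by ring. apply pow_lt. lra. }
 assert (2 / sqrt (2 * 1 * m * P m w) < 2 / sqrt xl).
 { apply Rmult_lt_compat_l; [lra|]. apply Rinv_lt_contravar.
   apply Rmult_lt_0_compat; apply sqrt_lt_R0; lra. apply sqrt_lt_1_alt; lra. }
 pose proof (tangent xa xl H3 Hxl). pose proof (tangent xb xl H4 Hxl).
 assert (th * ((xa - xl) / (xl * sqrt xl)) + (1-th) * ((xb - xl) / (xl * sqrt xl)) = 0).
 { pose proof (sqrt_lt_R0 _ Hxl). assert (E: th*(xa-xl) + (1-th)*(xb-xl) = 0) by (unfold xl; ring).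
   assert (0 < xl * sqrt xl) by (apply Rmult_lt_0_compat; lra).
   replace (th * ((xa - xl) / (xl * sqrt xl)) + (1-th) * ((xb - xl) / (xl * sqrt xl))) with ((th*(xa-xl) + (1-th)*(xb-xl)) / (xl * sqrt xl)) by (field; lra).
   rewrite E. unfold Rdiv. ring. }
 nra. Qed.

Lemma T1_conv a b th : 0 < a < b -> b < 1 -> 0 < th < 1 ->
  T1 (th*a + (1-th)*b) < th * T1 a + (1-th) * T1 b.
Proof. intros. unfold T1, phi.
 assert (Hm : 0 < th*a + (1-th)*b < 1) by (apply conv_in; auto).
 replace (th * RInt (kk 1 a) 0 1 + (1 - th) * RInt (kk 1 b) 0 1) with
   (RInt (fun w => plus (scal th (kk 1 a w)) (scal (1-th) (kk 1 b w))) 0 1).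
 - apply RInt_lt; [lra| |intros; apply kk_cont; lra|].
   + intros. apply (continuous_plus (V := R_NormedModule)); apply (continuous_scal_r (V := R_NormedModule)); apply kk_cont; lra.
   + intros. unfold plus, scal; simpl; unfold mult; simpl. apply kk_conv; lra.
 - rewrite (RInt_plus (V := R_CompleteNormedModule)).
   rewrite !(RInt_scal (V := R_CompleteNormedModule)). reflexivity.
   apply kk_int; lra. apply kk_int; lra.
   apply (ex_RInt_scal (V := R_NormedModule)), kk_int; lra.
   apply (ex_RInt_scal (V := R_NormedModule)), kk_int; lra.
Qed.

Lemma T1_lo0 s : 0 < s < 1 -> 2 / sqrt (2*1*s) <= T1 s.
Proof. intros. unfold T1, phi.
 replace (2 / sqrt (2*1*s)) with (RInt (fun _ => 2 / sqrt (2*1*s)) 0 1).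
 - apply RInt_le; [lra| |apply kk_int; lra|].
   + apply exRInt_cont. intros. apply continuous_const.
   + intros. apply kk_lo; lra.
 - rewrite RInt_const. unfold scal; simpl; unfold mult; simpl. ring.
Qed.

Lemma T1_lo_a s a : 0 < s < 1 -> a = sqrt (2*(1-s)) -> a < 1 -> - sqrt 2 * ln a <= T1 s.
Proof. intros Hs Ha Ha1.
 assert (Ha0 : 0 < a) by (subst; apply sqrt_lt_R0; lra).
 assert (Ha2 : a * a = 2*(1-s)) by (subst; apply sqrt_sqrt; lra).
 pose proof (sqrt_lt_R0 2 ltac:(lra)) as Hs2.
 unfold T1, phi. rewrite <- (RInt_Chasles (V := R_CompleteNormedModule) _ 0 a 1) by (apply kk_int; lra).
 unfold plus; simpl.
 assert (0 <= RInt (kk 1 s) 0 a).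
 { apply Rlt_le, RInt_gt_0; auto. intros; apply kk_pos; lra. intros; apply kk_cont; lra. }
 assert (HI : is_RInt (fun w => sqrt 2 / w) a 1 (minus (sqrt 2 * ln 1) (sqrt 2 * ln a))).
 { apply (is_RInt_derive (V := R_CompleteNormedModule) (fun w => sqrt 2 * ln w)).
   - intros x Hx. rewrite Rmin_left, Rmax_right in Hx by lra. auto_derive. lra. field. lra.
   - intros x Hx. rewrite Rmin_left, Rmax_right in Hx by lra. apply exd_cont. auto_derive. lra. }
 assert (RInt (fun w => sqrt 2 / w) a 1 <= RInt (kk 1 s) a 1).
 { apply RInt_le; [lra|eexists; eauto|apply kk_int; lra|].
   intros w Hw. unfold kk. pose proof (Pbounds s w Hs ltac:(simpl; nra)).
   pose proof (Q_pos 1 s ltac:(lra) Hs w).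
   assert (sqrt (2*1*s*P s w) <= sqrt 2 * w).
   { replace (sqrt 2 * w) with (sqrt (2*(w*w))) by (rewrite sqrt_mult_alt, sqrt_square; lra).
     apply sqrt_le_1_alt. simpl in H0. nra. }
   assert (0 < sqrt (2*1*s*P s w)) by (apply sqrt_lt_R0; lra).
   replace (sqrt 2 / w) with (2 / (sqrt 2 * w)).
   2:{ rewrite <- (sqrt_sqrt 2) at 1 by lra. field. split; lra. }
   apply Rmult_le_compat_l; [lra|]. apply Rinv_le_contravar; auto. }
 rewrite (is_RInt_unique _ _ _ _ HI) in H0. unfold minus, plus, opp in H0; simpl in H0.
 rewrite ln_1 in H0. lra.
Qed.

Lemma T1_lo1 M : exists eta, 0 < eta < 1 /\ forall s, 1 - eta < s < 1 -> M < T1 s.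
Proof. set (c := exp (- (Rabs M + 1) / sqrt 2)).
 pose proof (sqrt_lt_R0 2 ltac:(lra)) as Hs2.
 assert (Hc0 : 0 < c) by apply exp_pos.
 assert (Hc1 : c < 1).
 { unfold c. apply (Rlt_le_trans _ (exp 0)); [|rewrite exp_0; lra]. apply exp_increasing. pose proof (Rabs_pos M).
   assert (0 < (Rabs M + 1) / sqrt 2) by (apply Rdiv_lt_0_compat; lra).
   replace (- (Rabs M + 1) / sqrt 2) with (- ((Rabs M + 1) / sqrt 2)) by (field; lra). lra. }
 assert (0 < c*c) by nra. assert (c*c < 1) by nra.
 exists (c^2/2). split; [simpl; lra|].
 intros s Hs. set (a := sqrt (2*(1-s))).
 assert (a < c).
 { unfold a. rewrite <- (sqrt_pow2 c) by lra. apply sqrt_lt_1_alt. simpl in *. lra. }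
 assert (0 < a) by (apply sqrt_lt_R0; lra).
 pose proof (T1_lo_a s a ltac:(lra) eq_refl ltac:(lra)).
 assert (Hln : ln a < ln c) by (apply ln_increasing; lra).
 unfold c in Hln. rewrite ln_exp in Hln.
 assert (Rabs M + 1 < - sqrt 2 * ln a).
 { apply (Rmult_lt_compat_l (sqrt 2)) in Hln; auto.
   replace (sqrt 2 * (- (Rabs M + 1) / sqrt 2)) with (- (Rabs M + 1)) in Hln by (field; lra). lra. }
 pose proof (Rle_abs M). lra.
Qed.


Lemma T1_lo0' M : exists eta, 0 < eta < 1/2 /\ forall s, 0 < s <= eta -> M < T1 s.
Proof. set (K := Rabs M + 1). assert (HK : 1 <= K) by (unfold K; pose proof (Rabs_pos M); lra).
 exists (1 / (4 * (K*K))). split.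
 - split. apply Rdiv_lt_0_compat; nra. apply (Rmult_lt_reg_l (4*(K*K))); [nra|]. field_simplify; nra.
 - intros s Hs. assert (s < 1) by (assert (1/(4*(K*K)) <= 1/4) by (apply Rmult_le_compat_l; [lra|apply Rinv_le_contravar; nra]); lra).
   pose proof (T1_lo0 s ltac:(lra)).
   assert (sqrt (2*1*s) <= 1 / K).
   { rewrite <- (sqrt_pow2 (1/K)) by (apply Rlt_le, Rdiv_lt_0_compat; lra). apply sqrt_le_1_alt.
     replace ((1/K)^2) with (1/(K*K)) by (field; lra).
     assert (2 * s <= 2 * (1 / (4 * (K * K)))) by lra.
     replace (2 * (1 / (4 * (K * K)))) with (1/(2*(K*K))) in H1 by (field; lra).
     assert (1/(2*(K*K)) <= 1/(K*K)) by (apply Rmult_le_compat_l; [lra|apply Rinv_le_contravar; nra]). lra. }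
   assert (0 < sqrt (2*1*s)) by (apply sqrt_lt_R0; lra).
   assert (2 * K <= 2 / sqrt (2*1*s)).
   { apply (Rmult_le_reg_r (sqrt (2*1*s))); auto. field_simplify; [|lra].
     apply (Rmult_le_compat_l K) in H1; [|lra]. replace (K * (1/K)) with 1 in H1 by (field; lra). lra. }
   pose proof (Rle_abs M). unfold K in *. lra.
Qed.

Lemma T1_has_min : exists sm, 0 < sm < 1 /\ forall s, 0 < s < 1 -> T1 sm <= T1 s.
Proof. destruct (T1_lo0' (T1 (1/2))) as [a [Ha Ha']].
 destruct (T1_lo1 (T1 (1/2))) as [e [He He']].
 destruct (continuity_ab_min T1 a (1 - e/2) ltac:(lra)) as [sm [Hm Hsm]].
 { intros; apply T1_cont; lra. }
 assert (Ha2 : a < 1/2 < 1 - e/2 \/ ~ (1/2 < 1 - e/2)) by lra.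
 exists sm. split; [lra|]. intros s Hs.
 assert (H12 : T1 sm <= T1 (1/2)).
 { destruct (Rle_dec (1/2) (1 - e/2)). apply Hm; lra.
   assert (T1 (1/2) > T1 (1/2)) by (apply He'; lra). lra. }
 destruct (Rle_dec s a). specialize (Ha' s ltac:(lra)). lra.
 destruct (Rle_dec s (1 - e/2)). apply Hm; lra.
 specialize (He' s ltac:(lra)). lra.
Qed.

Section Min.
Variable sm : R.
Hypothesis Hsm : 0 < sm < 1.
Hypothesis Hmin : forall s, 0 < s < 1 -> T1 sm <= T1 s.

Lemma min_strict s : 0 < s < 1 -> s <> sm -> T1 sm < T1 s.
Proof. intros. destruct (Rtotal_order s sm) as [Hl|[He|Hg]]; [|lra|].
 - pose proof (T1_conv s sm (1/2) ltac:(lra) ltac:(lra) ltac:(lra)).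
   pose proof (conv_in s sm (1/2) ltac:(lra) ltac:(lra) ltac:(lra)).
   specialize (Hmin (1/2*s + (1-1/2)*sm) ltac:(lra)). lra.
 - pose proof (T1_conv sm s (1/2) ltac:(lra) ltac:(lra) ltac:(lra)).
   pose proof (conv_in sm s (1/2) ltac:(lra) ltac:(lra) ltac:(lra)).
   specialize (Hmin (1/2*sm + (1-1/2)*s) ltac:(lra)). lra.
Qed.

Lemma T1_decr s s' : 0 < s -> s < s' -> s' <= sm -> T1 s' < T1 s.
Proof. intros. destruct (Req_dec s' sm) as [->|].
 - apply min_strict; lra.
 - set (th := (sm - s') / (sm - s)).
   assert (Hth : 0 < th < 1).
   { unfold th. split. apply Rdiv_lt_0_compat; lra. apply (Rmult_lt_reg_r (sm - s)); [lra|]. field_simplify; lra. }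
   assert (E : s' = th * s + (1 - th) * sm) by (unfold th; field; lra).
   pose proof (T1_conv s sm th ltac:(lra) ltac:(lra) Hth). rewrite <- E in H3.
   assert (T1 sm <= T1 s') by (apply Hmin; lra). nra.
Qed.

Lemma T1_incr s s' : sm <= s -> s < s' -> s' < 1 -> T1 s < T1 s'.
Proof. intros. destruct (Req_dec s sm) as [->|].
 - apply min_strict; lra.
 - set (th := (s' - s) / (s' - sm)).
   assert (Hth : 0 < th < 1).
   { unfold th. split. apply Rdiv_lt_0_compat; lra. apply (Rmult_lt_reg_r (s' - sm)); [lra|]. field_simplify; lra. }
   assert (E : s = th * sm + (1 - th) * s') by (unfold th; field; lra).
   pose proof (T1_conv sm s' th ltac:(lra) ltac:(lra) Hth). rewrite <- E in H3.
   assert (T1 sm <= T1 s) by (apply Hmin; lra). nra.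
Qed.

Lemma T1_two c : T1 sm < c -> exists s0 s1, 0 < s0 < sm /\ sm < s1 < 1 /\ T1 s0 = c /\ T1 s1 = c /\
  forall s, 0 < s < 1 -> T1 s = c -> s = s0 \/ s = s1.
Proof. intros Hc.
 destruct (T1_lo0' c) as [a [Ha Ha']]. set (a' := Rmin a (sm/2)).
 assert (Ha'0 : 0 < a' <= a) by (unfold a'; split; [apply Rmin_glb_lt; lra|apply Rmin_l]).
 assert (Ha's : a' < sm) by (unfold a'; pose proof (Rmin_r a (sm/2)); lra).
 destruct (T1_lo1 c) as [e [He He']]. set (b := Rmax (1 - e/2) ((1+sm)/2)).
 assert (Hb : 1 - e/2 <= b /\ (1+sm)/2 <= b) by (unfold b; split; [apply Rmax_l|apply Rmax_r]).
 assert (Hb1 : b < 1) by (unfold b; apply Rmax_lub_lt; lra).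
 destruct (Ranalysis5.IVT_interv (fun x => c - T1 x) a' sm) as [s0 [Hs0 Hs0']].
 { intros; apply continuity_pt_minus; [apply continuity_pt_const; intros ? ?; auto|apply T1_cont; lra]. }
 lra. specialize (Ha' a' ltac:(lra)). lra. lra.
 destruct (Ranalysis5.IVT_interv (fun x => T1 x - c) sm b) as [s1 [Hs1 Hs1']].
 { intros; apply continuity_pt_minus; [apply T1_cont; lra|apply continuity_pt_const; intros ? ?; auto]. }
 lra. lra. specialize (He' b ltac:(lra)). lra.
 simpl in Hs0', Hs1'.
 assert (s0 <> sm) by (intro; subst; lra). assert (s1 <> sm) by (intro; subst; lra).
 exists s0, s1. split; [lra|]. split; [lra|]. split; [lra|]. split; [lra|].
 intros s Hs Hsc.
 destruct (Rtotal_order s sm) as [Hl|[He0|Hg]].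
 - left. destruct (Rtotal_order s s0) as [H1|[H1|H1]]; auto.
   + pose proof (T1_decr s s0 ltac:(lra) H1 ltac:(lra)). lra.
   + pose proof (T1_decr s0 s ltac:(lra) H1 ltac:(lra)). lra.
 - subst. lra.
 - right. destruct (Rtotal_order s s1) as [H1|[H1|H1]]; auto.
   + pose proof (T1_incr s s1 ltac:(lra) H1 ltac:(lra)). lra.
   + pose proof (T1_incr s1 s ltac:(lra) H1 ltac:(lra)). lra.
Qed.
End Min.


Lemma sqrt_diff a b : 0 <= a -> 0 <= b -> Rabs (sqrt a - sqrt b) <= sqrt (Rabs (a - b)).
Proof. intros. pose proof (sqrt_pos a). pose proof (sqrt_pos b).
 pose proof (sqrt_sqrt a H). pose proof (sqrt_sqrt b H0).
 set (p := sqrt a) in *. set (q := sqrt b) in *. clearbody p q. subst a b.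
 rewrite <- (sqrt_Rsqr (Rabs (p - q))) by apply Rabs_pos. apply sqrt_le_1_alt.
 rewrite <- Rsqr_abs. unfold Rsqr.
 replace (p * p - q * q) with ((p - q) * (p + q)) by ring. rewrite Rabs_mult, (Rabs_right (p+q)) by lra.
 destruct (Rle_dec q p).
 - rewrite Rabs_right by lra. nra.
 - rewrite Rabs_left by lra. nra.
Qed.

Lemma dist_le p q : sqrt (p^2 + q^2) <= Rabs p + Rabs q.
Proof. rewrite <- (sqrt_Rsqr (Rabs p + Rabs q)) by (pose proof (Rabs_pos p); pose proof (Rabs_pos q); lra).
 apply sqrt_le_1_alt. unfold Rsqr. rewrite <- !Rsqr_pow2. rewrite (Rsqr_abs p), (Rsqr_abs q). unfold Rsqr.
 pose proof (Rabs_pos p); pose proof (Rabs_pos q). nra. Qed.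

Lemma G_small x : 0 <= x <= 1 -> 0 <= G x <= x.
Proof. intros. unfold G. assert (x^4 <= x^3) by (simpl; assert (0 <= x*x*x) by (apply Rmult_le_pos; nra); nra).
 assert (x^3 <= x) by (simpl; assert (x*x <= 1) by nra; assert (x*(x*x) <= x*1) by (apply Rmult_le_compat_l; lra); lra). assert (0 <= x^3) by (apply pow_le; lra). assert (0 <= x^4) by (apply pow_le; lra). lra. Qed.

Lemma G_le_third x : 0 <= x <= 1 -> G x <= x / 3.
Proof. intros. unfold G. assert (0 <= x^4) by (apply pow_le; lra).
 assert (x^3 <= x) by (simpl; assert (x*x <= 1) by nra; nra). lra. Qed.

Lemma G1 : G 1 = 1/12. Proof. unfold G. field. Qed.

Lemma G_contpt x : continuity_pt G x.
Proof. apply exd_contpt. eexists. apply G_deriv. Qed.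

Lemma cont_at (f : R -> R) x0 : continuity_pt f x0 ->
  forall e, 0 < e -> exists d, 0 < d /\ forall x, Rabs (x - x0) < d -> Rabs (f x - f x0) < e.
Proof. intros H e He. destruct (H e He) as [d [Hd H']]. exists d. split; auto.
 intros x Hx. destruct (Req_dec x x0) as [->|]. rewrite Rminus_diag, Rabs_R0; auto.
 apply H'. split; [split; [constructor|auto]|]. simpl. unfold R_dist. auto. Qed.

Lemma sqrt_lt_half z e : 0 < e -> z < e^2/4 -> sqrt z < e/2.
Proof. intros. destruct (Rle_dec z 0). rewrite sqrt_neg_0 by auto; lra.
 rewrite <- (sqrt_pow2 (e/2)) by lra. apply sqrt_lt_1_alt. split; [lra|]. replace ((e/2)^2) with (e^2/4) by field. auto. Qed.

Lemma CL1 lam sigma s0 : 0 < lam -> 0 < sigma -> 0 < s0 < 1 -> T1 s0 = sigma * sqrt lam ->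
  (forall d, 0 < d -> exists s, 0 < s < 1 /\ Rabs (s - s0) < d /\ sigma * sqrt lam < T1 s) ->
  closure2 (Gamma0 lam sigma) (0, - sqrt (2 * lam * G s0)).
Proof. intros Hl Hsig Hs0 HT Happ eps Heps.
 pose proof (sqrt_lt_R0 lam Hl) as Hr. set (r := sqrt lam) in *.
 set (eta := Rmin (eps/2) (eps^2/(32*lam))).
 assert (Heta : 0 < eta) by (apply Rmin_glb_lt; [lra|apply Rdiv_lt_0_compat; [nra|lra]]).
 assert (Heta1 : eta <= eps/2) by apply Rmin_l. assert (Heta2 : eta <= eps^2/(32*lam)) by apply Rmin_r.
 destruct (cont_at T1 s0 (T1_cont s0 Hs0) (eta/2) ltac:(lra)) as [d1 [Hd1 Hd1']].
 destruct (cont_at G s0 (G_contpt s0) eta Heta) as [d2 [Hd2 Hd2']].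
 destruct (Happ (Rmin d1 d2) ltac:(apply Rmin_glb_lt; lra)) as [s [Hs [Hss0 HTs]]].
 assert (Hsd1 : Rabs (s - s0) < d1) by (eapply Rlt_le_trans; [apply Hss0|apply Rmin_l]).
 assert (Hsd2 : Rabs (s - s0) < d2) by (eapply Rlt_le_trans; [apply Hss0|apply Rmin_r]).
 specialize (Hd1' s Hsd1). specialize (Hd2' s Hsd2).
 rewrite HT in Hd1'. apply Rabs_def2 in Hd1'. apply Rabs_def2 in Hd2'.
 assert (Hphi : phi lam s 1 = T1 s / r) by (apply phi1_T1; auto).
 assert (Hsig' : sigma < phi lam s 1).
 { rewrite Hphi. apply (Rmult_lt_reg_r r); auto. field_simplify; lra. }
 destruct (Gamma0_mk lam sigma s Hl Hsig Hs Hsig') as [p [Hp [Hx0 [Hxs [Hy [Hlo _]]]]]].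
 exists p. split; auto. destruct p as [x y']. simpl in *.
 assert (Hx : x < eta).
 { rewrite Hphi in Hlo.
   assert (Hsq : 0 < sqrt (2*lam*s)) by (apply sqrt_lt_R0; nra).
   assert (sqrt (2*lam*s) <= sqrt 2 * r) by (unfold r; rewrite <- sqrt_mult_alt by lra; apply sqrt_le_1_alt; nra).
   assert (sqrt 2 < 2) by (rewrite <- (sqrt_pow2 2) at 2 by lra; apply sqrt_lt_1_alt; simpl; lra).
   assert (Hxb : x <= s * sqrt (2*lam*s) * (T1 s / r - sigma)).
   { apply (Rmult_le_reg_r (/ (s * sqrt (2*lam*s)))). apply Rinv_0_lt_compat; nra.
     replace (s * sqrt (2 * lam * s) * (T1 s / r - sigma) * / (s * sqrt (2 * lam * s))) with (T1 s / r - sigma) by (field; lra).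
     exact Hlo. }
   assert (Htb : T1 s / r - sigma < eta / 2 / r).
   { replace (T1 s / r - sigma) with ((T1 s - sigma * r) / r) by (field; lra).
     unfold Rdiv. apply Rmult_lt_compat_r; [apply Rinv_0_lt_compat; lra|]. lra. }
   assert (T1 s / r - sigma > 0) by lra.
   assert (Hx2 : x < s * sqrt (2*lam*s) * (eta/2/r)) by (eapply Rle_lt_trans; [apply Hxb|apply Rmult_lt_compat_l; [nra|auto]]).
   assert (Hx3 : s * sqrt (2*lam*s) * (eta/2/r) <= sqrt 2 * r * (eta/2/r)).
   { apply Rmult_le_compat_r. apply Rlt_le, Rdiv_lt_0_compat; lra. nra. }
   replace (sqrt 2 * r * (eta/2/r)) with (sqrt 2 * eta / 2) in Hx3 by (field; lra). nra. }
 eapply Rle_lt_trans. apply dist_le.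
 assert (HGx : 0 <= G x <= x) by (apply G_small; lra).
 assert (HGs : G x < G s) by (apply Gmono; lra).
 assert (HG0 : 0 < G s0) by (pose proof (Gmono 0 s0 ltac:(lra) ltac:(lra)); unfold G at 1 in H; simpl in H; lra).
 rewrite Hy. replace (- sqrt (2 * lam * G s0) - - sqrt (2 * lam * (G s - G x))) with
   (sqrt (2 * lam * (G s - G x)) - sqrt (2 * lam * G s0)) by ring.
 pose proof (sqrt_diff (2 * lam * (G s - G x)) (2 * lam * G s0) ltac:(nra) ltac:(nra)).
 assert (Rabs (2 * lam * (G s - G x) - 2 * lam * G s0) < eps^2/4).
 { replace (2 * lam * (G s - G x) - 2 * lam * G s0) with (2*lam*((G s - G s0) - G x)) by ring.
   rewrite Rabs_mult, Rabs_right by lra. apply Rabs_def2 in Hd2' || idtac.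
   assert (Rabs (G s - G s0 - G x) < 2 * eta) by (apply Rabs_def1; lra).
   assert (2 * lam * (2*eta) <= eps^2/8).
   { apply (Rmult_le_compat_l (4*lam)) in Heta2; [|lra]. assert (E1 : 4 * lam * (eps * (eps * 1) / (32 * lam)) = eps^2/8) by (field; lra). replace (2*lam*(2*eta)) with (4*lam*eta) by ring. lra. }
   assert (0 < eps^2) by nra. nra. }
 pose proof (sqrt_lt_half _ eps Heps H0).
 rewrite Rminus_0_l, Rabs_Ropp, Rabs_right by lra. lra.
Qed.

Lemma sqrt_ge_abs a b : Rabs a <= sqrt (a^2 + b^2).
Proof. rewrite <- sqrt_Rsqr_abs. apply sqrt_le_1_alt. rewrite Rsqr_pow2. pose proof (pow2_ge_0 b). lra. Qed.

Lemma CL2_ext lam sigma y : 0 < lam -> 0 < sigma -> y < 0 -> closure2 (Gamma0 lam sigma) (0, y) ->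
  forall t, 0 < t -> exists s, 0 < s < 1 /\ sigma * sqrt lam < T1 s < sigma * sqrt lam + t /\
     Rabs (G s - y^2/(2*lam)) < t.
Proof. intros Hl Hsig Hy Hcl t Ht.
 pose proof (sqrt_lt_R0 lam Hl) as Hr. set (r := sqrt lam) in *.
 set (Y := y^2/(2*lam)).
 assert (HY : 0 < Y) by (unfold Y; apply Rdiv_lt_0_compat; [simpl; nra|lra]).
 set (t' := Rmin t (Y/2)).
 assert (Ht' : 0 < t' /\ t' <= t /\ t' <= Y/2) by (unfold t'; split; [apply Rmin_glb_lt; lra|split; [apply Rmin_l|apply Rmin_r]]).
 set (slo := 3*Y/2).
 assert (Hslo : 0 < slo) by (unfold slo; lra).
 set (K := 2 / sqrt (2*lam*slo/48)).
 assert (HK : 0 < K) by (unfold K; apply Rdiv_lt_0_compat; [lra|apply sqrt_lt_R0; nra]).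
 set (C := r * K / slo).
 assert (HC : 0 < C) by (unfold C; apply Rdiv_lt_0_compat; [nra|lra]).
 set (D1 := (2 * Rabs y + 1)/(2*lam) + 2).
 assert (HD1 : 2 <= D1) by (unfold D1; pose proof (Rabs_pos y); assert (0 <= (2 * Rabs y + 1)/(2*lam)) by (apply Rdiv_le_0_compat; lra); lra).
 set (eps := Rmin (Rmin 1 (t'/D1)) (Rmin (9*Y/8) (t/(C+1)))).
 assert (He1 : eps <= 1) by (unfold eps; eapply Rle_trans; [apply Rmin_l|apply Rmin_l]).
 assert (He2 : eps <= t'/D1) by (unfold eps; eapply Rle_trans; [apply Rmin_l|apply Rmin_r]).
 assert (He3 : eps <= 9*Y/8) by (unfold eps; eapply Rle_trans; [apply Rmin_r|apply Rmin_l]).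
 assert (He4 : eps <= t/(C+1)) by (unfold eps; eapply Rle_trans; [apply Rmin_r|apply Rmin_r]).
 assert (He : 0 < eps).
 { unfold eps. apply Rmin_glb_lt; apply Rmin_glb_lt; try lra; apply Rdiv_lt_0_compat; lra. }
 destruct (Hcl eps He) as [q [Hq Hdist]].
 destruct (Gamma0_inv lam sigma q Hl Hsig Hq) as [s [Hs [Hphi [Hx0 [Hxs [Hyq [Hlo Hhi]]]]]]].
 destruct q as [x y']. simpl in *.
 assert (Hx : Rabs (0 - x) < eps) by (eapply Rle_lt_trans; [apply sqrt_ge_abs|apply Hdist]).
 assert (Hyy : Rabs (y - y') < eps).
 { eapply Rle_lt_trans; [|apply Hdist]. rewrite Rplus_comm. apply sqrt_ge_abs. }
 rewrite Rminus_0_l, Rabs_Ropp, Rabs_right in Hx by lra.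
 assert (HGx : 0 <= G x <= x) by (apply G_small; lra).
 assert (HGs : G x < G s) by (apply Gmono; lra).
 assert (Hy2 : y'^2 = 2*lam*(G s - G x)).
 { rewrite Hyq. rewrite <- Rsqr_pow2, <- Rsqr_neg, Rsqr_sqrt; auto. nra. }
 assert (HGY : Rabs (G s - Y) < t').
 { assert (E : G s - Y = (y'^2 - y^2)/(2*lam) + G x) by (unfold Y; rewrite Hy2; field; lra).
   rewrite E.
   assert (Rabs (y'^2 - y^2) <= eps * (2 * Rabs y + 1)).
   { replace (y'^2 - y^2) with ((y' - y) * (y' + y)) by ring. rewrite Rabs_mult.
     rewrite Rabs_minus_sym in Hyy.
     assert (Rabs (y' + y) <= 2 * Rabs y + 1).
     { replace (y' + y) with ((y' - y) + 2*y) by ring. eapply Rle_trans; [apply Rabs_triang|].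
       rewrite Rabs_mult, (Rabs_right 2) by lra. lra. }
     apply Rmult_le_compat; try apply Rabs_pos; lra. }
   eapply Rle_lt_trans. apply Rabs_triang. rewrite Rabs_right with (r := G x) by lra.
   unfold Rdiv at 1. rewrite Rabs_mult, (Rabs_right (/ (2*lam))) by (apply Rle_ge, Rlt_le, Rinv_0_lt_compat; lra).
   assert (Rabs (y'^2 - y^2) * / (2*lam) <= eps * ((2 * Rabs y + 1) / (2*lam))).
   { unfold Rdiv. rewrite <- Rmult_assoc. apply Rmult_le_compat_r; [apply Rlt_le, Rinv_0_lt_compat; lra|auto]. }
   assert (eps * D1 <= t') by (apply (Rmult_le_compat_r D1) in He2; [|lra]; replace (t'/D1*D1) with t' in He2 by (field; lra); lra).
   unfold D1 in H1. lra. }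
 assert (Hslo_s : slo <= s).
 { pose proof (G_le_third s ltac:(lra)). apply Rabs_def2 in HGY. unfold slo. lra. }
 assert (Hx34 : x <= 3*s/4) by (unfold slo in Hslo_s; lra).
 specialize (Hhi Hx34).
 assert (Hphi1 : phi lam s 1 = T1 s / r) by (apply phi1_T1; auto).
 rewrite Hphi1 in Hhi, Hphi.
 assert (HKs : 2 / sqrt (2*lam*s/48) <= K).
 { unfold K. apply Rmult_le_compat_l; [lra|]. apply Rinv_le_contravar. apply sqrt_lt_R0; nra.
   apply sqrt_le_1_alt. nra. }
 assert (Hxs' : x / s <= x / slo).
 { unfold Rdiv. apply Rmult_le_compat_l; [lra|]. apply Rinv_le_contravar; lra. }
 assert (T1 s / r - sigma <= K * (x / slo)).
 { eapply Rle_trans; [apply Hhi|]. apply Rmult_le_compat; try lra.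
   apply Rlt_le, Rdiv_lt_0_compat; [lra|apply sqrt_lt_R0; nra]. apply Rdiv_le_0_compat; lra. }
 assert (T1 s - sigma * r <= C * x).
 { replace (T1 s - sigma * r) with (r * (T1 s / r - sigma)) by (field; lra).
   replace (C * x) with (r * (K * (x / slo))) by (unfold C; field; lra).
   apply Rmult_le_compat_l; lra. }
 assert (C * x < t).
 { assert (C * x < C * eps) by (apply Rmult_lt_compat_l; lra).
   assert (C * eps <= C * (t/(C+1))) by (apply Rmult_le_compat_l; lra).
   assert (C * (t/(C+1)) < t) by (apply (Rmult_lt_reg_r (C+1)); [lra|]; field_simplify; lra). lra. }
 exists s. split; auto. split; [split|].
 - apply (Rmult_lt_reg_r (/ r)). apply Rinv_0_lt_compat; auto.
   replace (sigma * r * / r) with sigma by (field; lra). exact Hphi.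
 - lra.
 - lra.
Qed.

Lemma Gmono_le a b : a <= b -> b <= 1 -> G a <= G b.
Proof. intros. destruct (Req_dec a b) as [->|]; [lra|]. apply Rlt_le, Gmono; lra. Qed.

Lemma CL2 lam sigma y : 0 < lam -> 0 < sigma -> y < 0 -> closure2 (Gamma0 lam sigma) (0, y) ->
  exists s0, 0 < s0 < 1 /\ T1 s0 = sigma * sqrt lam /\ y = - sqrt (2 * lam * G s0).
Proof. intros Hl Hsig Hy Hcl.
 pose proof (CL2_ext lam sigma y Hl Hsig Hy Hcl) as Ext.
 set (c := sigma * sqrt lam) in *. set (Y := y^2/(2*lam)) in *.
 assert (HY : 0 < Y) by (unfold Y; apply Rdiv_lt_0_compat; [simpl; nra|lra]).
 assert (HY12 : Y <= 1/12).
 { destruct (Rle_dec Y (1/12)); auto. destruct (Ext (Y - 1/12) ltac:(lra)) as [s [Hs [_ HG]]].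
   apply Rabs_def2 in HG. pose proof (Gmono s 1 ltac:(lra) ltac:(lra)). rewrite G1 in H. lra. }
 assert (Hs0 : exists s0, 0 < s0 <= 1 /\ G s0 = Y).
 { destruct (Req_dec Y (1/12)). exists 1. split; [lra|]. rewrite G1; auto.
   destruct (Ranalysis5.IVT_interv (fun x => G x - Y) 0 1) as [z [Hz Hz']].
   - intros; apply continuity_pt_minus; [apply G_contpt|apply continuity_pt_const; intros ? ?; auto].
   - lra.
   - unfold G. simpl. lra.
   - rewrite G1. lra.
   - exists z. simpl in Hz'. assert (z <> 0) by (intro; subst; unfold G in Hz'; simpl in Hz'; lra). split; lra. }
 destruct Hs0 as [s0 [Hs0 HGs0]].
 destruct (Req_dec s0 1) as [E|Hne].
 - exfalso. subst s0. rewrite G1 in HGs0.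
   destruct (T1_lo1 (c+1)) as [e [He He']].
   pose proof (Gmono (1-e) 1 ltac:(lra) ltac:(lra)). rewrite G1 in H.
   destruct (Ext (Rmin 1 (1/12 - G (1-e))) ltac:(apply Rmin_glb_lt; lra)) as [s [Hs [HT HG]]].
   assert (Rmin 1 (1/12 - G (1-e)) <= 1) by apply Rmin_l.
   assert (Rmin 1 (1/12 - G (1-e)) <= 1/12 - G (1-e)) by apply Rmin_r.
   apply Rabs_def2 in HG.
   assert (1 - e < s).
   { destruct (Rlt_le_dec (1-e) s); auto. pose proof (Gmono_le s (1-e) r ltac:(lra)). lra. }
   specialize (He' s ltac:(lra)). lra.
 - assert (Hs0' : 0 < s0 < 1) by lra.
   exists s0. split; auto. split.
   + destruct (Req_dec (T1 s0) c); auto. exfalso.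
     set (d := Rabs (T1 s0 - c)).
     assert (Hd : 0 < d) by (unfold d; apply Rabs_pos_lt; lra).
     destruct (cont_at T1 s0 (T1_cont s0 Hs0') (d/2) ltac:(lra)) as [del [Hdel Hdel']].
     set (dl := Rmin del (Rmin s0 (1-s0)) / 2).
     assert (Hdl : 0 < dl /\ dl < del /\ dl < s0 /\ dl < 1 - s0).
     { unfold dl. pose proof (Rmin_l del (Rmin s0 (1-s0))). pose proof (Rmin_r del (Rmin s0 (1-s0))).
       pose proof (Rmin_l s0 (1-s0)). pose proof (Rmin_r s0 (1-s0)).
       assert (0 < Rmin del (Rmin s0 (1-s0))) by (apply Rmin_glb_lt; [lra|apply Rmin_glb_lt; lra]). lra. }
     pose proof (Gmono (s0 - dl) s0 ltac:(lra) ltac:(lra)).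
     pose proof (Gmono s0 (s0 + dl) ltac:(lra) ltac:(lra)).
     set (t := Rmin (d/2) (Rmin (G s0 - G (s0 - dl)) (G (s0 + dl) - G s0))).
     assert (Ht : 0 < t /\ t <= d/2 /\ t <= G s0 - G (s0 - dl) /\ t <= G (s0 + dl) - G s0).
     { unfold t. pose proof (Rmin_l (d/2) (Rmin (G s0 - G (s0 - dl)) (G (s0 + dl) - G s0))).
       pose proof (Rmin_r (d/2) (Rmin (G s0 - G (s0 - dl)) (G (s0 + dl) - G s0))).
       pose proof (Rmin_l (G s0 - G (s0 - dl)) (G (s0 + dl) - G s0)).
       pose proof (Rmin_r (G s0 - G (s0 - dl)) (G (s0 + dl) - G s0)).
       assert (0 < Rmin (d/2) (Rmin (G s0 - G (s0 - dl)) (G (s0 + dl) - G s0))) by (apply Rmin_glb_lt; [lra|apply Rmin_glb_lt; lra]). lra. }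
     destruct (Ext t ltac:(lra)) as [s [Hs [HT HG]]].
     rewrite <- HGs0 in HG. apply Rabs_def2 in HG.
     assert (s0 - dl < s).
     { destruct (Rlt_le_dec (s0 - dl) s); auto. pose proof (Gmono_le s (s0-dl) r ltac:(lra)). lra. }
     assert (s < s0 + dl).
     { destruct (Rlt_le_dec s (s0 + dl)); auto. pose proof (Gmono_le (s0+dl) s r ltac:(lra)). lra. }
     specialize (Hdel' s ltac:(apply Rabs_def1; lra)).
     unfold d in *. apply Rabs_def2 in Hdel'.
     destruct (Rle_dec 0 (T1 s0 - c)).
     * rewrite Rabs_right in Hdel', Ht by lra. lra.
     * rewrite Rabs_left in Hdel', Ht by lra. lra.
   + rewrite HGs0. unfold Y. replace (2 * lam * (y^2/(2*lam))) with (y^2) by (field; lra).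
     rewrite <- Rsqr_pow2, sqrt_Rsqr_abs, Rabs_left by lra. ring.
Qed.


Lemma G_pos s : 0 < s < 1 -> 0 < G s.
Proof. intros. pose proof (Gmono 0 s ltac:(lra) ltac:(lra)). unfold G at 1 in H0. simpl in H0. lra. Qed.

Theorem corollary2p1 (sigma : R) (Hsigma : 0 < sigma < 1 / 2) :
  exists lamstar, 0 < lamstar /\
    (forall lam, 0 < lam < lamstar ->
       forall y, y < 0 -> ~ closure2 (Gamma0 lam sigma) (0, y)) /\
    (exists xistar, 0 < xistar /\
       forall y, y < 0 -> (closure2 (Gamma0 lamstar sigma) (0, y) <-> y = - xistar)) /\
    (forall lam, lamstar < lam ->
       exists xi0 xi1, 0 < xi0 < xi1 /\
         forall y, y < 0 ->
           (closure2 (Gamma0 lam sigma) (0, y) <-> (y = - xi0 \/ y = - xi1))).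
Proof.
 destruct T1_has_min as [sm [Hsm Hmin]].
 set (m := T1 sm).
 assert (Hm : 0 < m).
 { pose proof (T1_lo0 sm Hsm). assert (0 < 2 / sqrt (2*1*sm)) by (apply Rdiv_lt_0_compat; [lra|apply sqrt_lt_R0; lra]). unfold m; lra. }
 set (lamstar := (m / sigma)^2).
 assert (Hls : 0 < lamstar) by (unfold lamstar; apply pow_lt; apply Rdiv_lt_0_compat; lra).
 assert (Hsq : sqrt lamstar = m / sigma) by (unfold lamstar; apply sqrt_pow2; apply Rlt_le, Rdiv_lt_0_compat; lra).
 assert (Hc : forall lam, 0 < lam -> (sigma * sqrt lam < m <-> lam < lamstar) /\ (sigma * sqrt lam = m <-> lam = lamstar)).
 { intros lam Hl. assert (E : m = sigma * sqrt lamstar) by (rewrite Hsq; field; lra).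
   rewrite E. split; split; intro H.
   - apply Rmult_lt_reg_l in H; [|lra]. destruct (Rlt_le_dec lam lamstar); auto.
     pose proof (sqrt_le_1_alt _ _ r). lra.
   - apply Rmult_lt_compat_l; [lra|]. apply sqrt_lt_1_alt. lra.
   - apply Rmult_eq_reg_l in H; [|lra]. rewrite <- (sqrt_sqrt lam), <- (sqrt_sqrt lamstar) by lra. rewrite H; auto.
   - subst; auto. }
 exists lamstar. split; [auto|split; [|split]].
 - intros lam [Hl Hll] y Hy Hcl.
   destruct (CL2 lam sigma y Hl ltac:(lra) Hy Hcl) as [s0 [Hs0 [HT _]]].
   pose proof (Hmin s0 Hs0). apply (Hc lam Hl) in Hll. fold m in H. lra.
 - exists (sqrt (2 * lamstar * G sm)). split.
   + apply sqrt_lt_R0. pose proof (G_pos sm Hsm). nra.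
   + intros y Hy. split.
     * intros Hcl. destruct (CL2 lamstar sigma y Hls ltac:(lra) Hy Hcl) as [s0 [Hs0 [HT Hy0]]].
       assert (s0 = sm).
       { destruct (Req_dec s0 sm); auto. pose proof (min_strict sm Hsm Hmin s0 Hs0 H).
         assert (sigma * sqrt lamstar = m) by (apply Hc; auto). fold m in H0. lra. }
       subst. auto.
     * intros ->. apply CL1; auto; try lra.
       -- symmetry. apply Hc; auto.
       -- intros d Hd. exists (sm + Rmin d (1 - sm) / 2).
          assert (0 < Rmin d (1-sm)) by (apply Rmin_glb_lt; lra).
          pose proof (Rmin_l d (1-sm)). pose proof (Rmin_r d (1-sm)).
          split; [lra|split].
          ++ replace (sm + Rmin d (1 - sm) / 2 - sm) with (Rmin d (1-sm)/2) by ring. rewrite Rabs_right; lra.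
          ++ assert (sigma * sqrt lamstar = m) by (apply Hc; auto). rewrite H2.
             apply min_strict; auto; lra.
 - intros lam Hll. assert (Hl : 0 < lam) by lra.
   assert (Hcm : m < sigma * sqrt lam).
   { destruct (Rtotal_order (sigma * sqrt lam) m) as [H|[H|H]]; auto.
     apply (Hc lam Hl) in H; lra. apply (Hc lam Hl) in H; lra. }
   destruct (T1_two sm Hsm Hmin (sigma * sqrt lam) Hcm) as [s0 [s1 [Hs0 [Hs1 [HT0 [HT1 Huniq]]]]]].
   exists (sqrt (2 * lam * G s0)), (sqrt (2 * lam * G s1)).
   split.
   + pose proof (G_pos s0 ltac:(lra)). pose proof (Gmono s0 s1 ltac:(lra) ltac:(lra)).
     split; [apply sqrt_lt_R0; nra|apply sqrt_lt_1_alt; split; nra].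
   + intros y Hy. split.
     * intros Hcl. destruct (CL2 lam sigma y Hl ltac:(lra) Hy Hcl) as [s [Hs [HT Hy0]]].
       destruct (Huniq s Hs HT) as [->| ->]; auto.
     * intros [-> | ->].
       -- apply CL1; auto; try lra.
          intros d Hd. exists (s0 - Rmin d s0 / 2).
          assert (0 < Rmin d s0) by (apply Rmin_glb_lt; lra).
          pose proof (Rmin_l d s0). pose proof (Rmin_r d s0).
          split; [lra|split].
          ++ replace (s0 - Rmin d s0 / 2 - s0) with (- (Rmin d s0/2)) by ring. rewrite Rabs_Ropp, Rabs_right; lra.
          ++ rewrite <- HT0. apply (T1_decr sm Hsm Hmin); lra.
       -- apply CL1; auto; try lra.
          intros d Hd. exists (s1 + Rmin d (1 - s1) / 2).
          assert (0 < Rmin d (1-s1)) by (apply Rmin_glb_lt; lra).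
          pose proof (Rmin_l d (1-s1)). pose proof (Rmin_r d (1-s1)).
          split; [lra|split].
          ++ replace (s1 + Rmin d (1 - s1) / 2 - s1) with (Rmin d (1-s1)/2) by ring. rewrite Rabs_right; lra.
          ++ rewrite <- HT1. apply (T1_incr sm Hsm Hmin); lra.
Qed.
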